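(* Let $\theta>-1$, $\beta>0$, and let $\mathscr{L}_i^{(\theta,\beta)}$, $i=0,1,2,\dots$, denote the generalized Laguerre polynomials $$\mathscr{L}_i^{(\theta,\beta)}(x)=\frac{1}{i!}x^{-\theta}e^{\beta x}\frac{d^i}{dx^i}\big(x^{i+\theta}e^{-\beta x}\big).$$ Let $n$ be a positive integer and $\varrho:(0,\infty)\to\mathbb{R}$ with $n-1<\varrho_{\min}<\varrho(x)<\varrho_{\max}<n$ for all $x>0$. For a sufficiently smooth function $u$ on $[0,\infty)$ define the variable-order Caputo derivative $${}_0^{C}\mathscr{D}_x^{\varrho(x)}u(x)=\frac{1}{\Gamma(n-\varrho(x))}\int_0^x (x-t)^{n-\varrho(x)-1}u^{(n)}(t)\,dt,$$ and for a function $\mu:(0,\infty)\to(0,\infty)$, $\alpha>-1$ and $k\ge0$ let $$\hat{\mathscr{L}}_k^{(\mu(x),\alpha,\beta)}(x)=\frac{1}{\Gamma(\mu(x))}\int_0^x (x-t)^{\mu(x)-1}\mathscr{L}_k^{(\alpha,\beta)}(t)\,dt .$$ Then for every $N\ge0$ and real coefficients $\ell_0,\dots,\ell_N$, the polynomial $u_N=\sum_{i=0}^N \ell_i\mathscr{L}_i^{(\theta,\beta)}$ satisfies, for all $x>0$, $${}_0^{C}\mathscr{D}_x^{\varrho(x)}u_N(x)=\sum_{i=0}^N \ell_i\,D_{i,n,\theta,\beta}^{(\varrho(x))}(x),$$ where $D_{i,n,\theta,\beta}^{(\varrho(x))}(x)=0$ for $0\le i\le n-1$ and $$D_{i,n,\theta,\beta}^{(\varrho(x))}(x)=(-\beta)^n\,\hat{\mathscr{L}}_{i-n}^{(n-\varrho(x),\theta+n,\beta)}(x)\quad\text{for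 } i\ge n.$$
   Context: Here the fractional order $\varrho(x)$ (resp. $\mu(x)$) is frozen at the outer variable $x$ inside the integral. The generalized Laguerre polynomials are orthogonal on $(0,\infty)$ with respect to the weight $x^\theta e^{-\beta x}$. *)

(* Defs.v *)
From HB Require Import structures.
From mathcomp Require Import all_boot all_order all_algebra.
From mathcomp Require Import all_classical all_reals all_analysis.
Set Implicit Arguments. Unset Strict Implicit. Unset Printing Implicit Defensive.
Import Order.TTheory GRing.Theory Num.Theory.
Local Open Scope classical_set_scope.
Local Open Scope ring_scope.

Section Defs.
Variable R : realType.

Definition Gamma (s : R) : R :=
  \int[lebesgue_measure]_(t in `]0%R, +oo[) (powR t (s - 1) * expR (- t)).

Definition Laguerre (theta beta : R) (i : nat) (x : R) : R :=
  (i`!%:R)^-1 * powR x (- theta) * expR (beta * x) *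
  derive1n i (fun y : R => powR y (i%:R + theta) * expR (- (beta * y))) x.

Definition caputo (n : nat) (rho : R -> R) (u : R -> R) (x : R) : R :=
  (Gamma (n%:R - rho x))^-1 *
  \int[lebesgue_measure]_(t in `[0%R, x]) (powR (x - t) (n%:R - rho x - 1) * derive1n n u t).

Definition hatLaguerre (mu : R -> R) (alpha beta : R) (k : nat) (x : R) : R :=
  (Gamma (mu x))^-1 *
  \int[lebesgue_measure]_(t in `[0%R, x]) (powR (x - t) (mu x - 1) * Laguerre alpha beta k t).

Definition Dcoef (n : nat) (theta beta : R) (rho : R -> R) (i : nat) (x : R) : R :=
  if (i < n)%N then 0
  else (- beta) ^+ n * hatLaguerre (fun y => n%:R - rho y) (theta + n%:R) beta (i - n) x.

End Defs.

(* Main.v *)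
Set Warnings "-notation-overridden,-ambiguous-paths,-deprecated,-notation-incompatible-prefix".
Require Import Defs.
From HB Require Import structures.
From mathcomp Require Import all_boot all_order all_algebra.
From mathcomp Require Import all_classical all_reals all_analysis.
From mathcomp Require Import ring lra.
From mathcomp Require Import measurable_realfun.
Import Order.TTheory GRing.Theory Num.Theory.
Local Open Scope ring_scope.
Section Q.
Variable R : realType.
Variables (c b : R).
Fixpoint qp (m : nat) : {poly R} :=
  match m with
  | 0 => 1
  | m.+1 => (c - m%:R)%:P * qp m - (b%:P * 'X) * qp m + 'X * (qp m)^`()
  end.

Lemma qp_deriv m : (qp m.+1)^`() = (- b * m.+1%:R)%:P * qp m.
Proof.
elim: m => [|m IH].
  rewrite /= !mulr1 derivC mulr0 addr0 derivB derivC derivM derivC derivX.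
  by rewrite mul0r !add0r mulr1 polyCN.
have E : qp m.+2 = (c - m.+1%:R)%:P * qp m.+1 - (b%:P * 'X) * qp m.+1 + 'X * (qp m.+1)^`() by [].
rewrite E.
have E1 : qp m.+1 = (c - m%:R)%:P * qp m - (b%:P * 'X) * qp m + 'X * (qp m)^`() by [].
move: (qp m.+1) (qp m) IH E1 => q1 q0 IH E1.
rewrite !(derivD, derivN, derivB, derivM, derivC, derivX) IH !(derivM, derivC).
rewrite E1.
rewrite !polyCM !polyCN !polyCB -!natr1 !polyCD.
ring.
Qed.

Lemma derivn_add (p : {poly R}) i k : p^`(i + k) = (p^`(i))^`(k).
Proof. by elim: k => [|k IH]; rewrite ?addn0 ?derivn0 // addnS !derivnS IH. Qed.

Lemma qp_derivn j k : (qp (j + k))^`(k) = ((- b) ^+ k * ((j + k) ^_ k)%:R)%:P * qp j.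
Proof.
elim: k => [|k IH]; first by rewrite addn0 derivn0 ffactn0 expr0 mul1r mul1r.
rewrite addnS.
have -> : (qp (j+k).+1)^`(k.+1) = ((qp (j+k).+1)^`())^`(k) by rewrite -derivn1 -derivn_add.
rewrite qp_deriv mul_polyC derivnZ IH -mul_polyC mulrA -polyCM.
congr (_%:P * _).
rewrite ffactSS natrM exprS -!mulrA; congr (_ * _); exact: mulrCA.
Qed.

Lemma qp_derivn0 i k : (i < k)%N -> (qp i)^`(k) = 0.
Proof.
move=> ik; have := qp_derivn 0 i; rewrite add0n /= mulr1 => Hi.
have -> : k = (i + (k - i).-1.+1)%N by rewrite prednK ?subn_gt0 // subnKC // ltnW.
rewrite derivn_add Hi derivnS derivnC; case: ifP => _; by rewrite ?derivC ?deriv0.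
Qed.
End Q.
Arguments qp {R}.

Section W.
Variable R : realType.
Lemma Dg (b y : R) : is_derive y 1 (fun z : R => - (b * z)) (- b).
Proof.
have := is_deriveN (is_deriveZ b (is_derive_id y (1:R))).
by rewrite /GRing.scale /= mulr1.
Qed.

Lemma w_deriv (c b : R) m y : 0 < y ->
  derive1n m (fun z => powR z c * expR (- (b * z))) y =
  powR y (c - m%:R) * expR (- (b * y)) * (qp c b m).[y].
Proof.
elim: m y => [|m IH] y y0.
  by rewrite derive1n0 subr0 /= hornerE mulr1.
rewrite derive1nS derive1E.
pose H := (fun z => powR z (c - m%:R)) * (fun z => expR (- (b * z))) * horner (qp c b m).
have Hn : \near y, derive1n m (fun z => powR z c * expR (- (b * z))) y = H y.
  near=> z; rewrite IH //; near: z; exact: lt_nbhsr.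
rewrite (near_eq_derive _ Hn).
have D1 := is_derive1_powR (c - m%:R) y0.
have D2 := @is_derive1_comp _ expR (fun z => - (b * z)) y _ _ (is_derive_expR _) (Dg b y).
have D3 := is_derive_poly (qp c b m) y.
have D := is_deriveM (is_deriveM D1 D2) D3.
rewrite (@derive_val _ _ _ _ _ _ _ D) /=.
have Ey : y `^ (c - m%:R) = y `^ (c - m.+1%:R) * y.
  have -> : c - m%:R = (c - m.+1%:R) + 1 by rewrite -natr1; ring.
  by rewrite powRD ?(powRr1 (ltW y0)) // (gt_eqF y0) implybT.
have Em : c - m%:R - 1 = c - m.+1%:R by rewrite -natr1; ring.
rewrite Em !hornerE /=.
rewrite -[((_ * _) y)]/(y `^ (c - m%:R) * expR (- (b * y))) Ey /GRing.scale /=.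
ring.
Unshelve. all: end_near.
Qed.

Lemma Lag_pos (th b : R) i t : 0 < t ->
  Laguerre th b i t = (i`!%:R)^-1 * (qp (i%:R + th) b i).[t].
Proof.
move=> t0; rewrite /Laguerre w_deriv //.
have -> : i%:R + th - i%:R = th by ring.
rewrite -!mulrA; congr (_ * _).
have h1 : expR (b * t) * expR (- (b * t)) = 1 by rewrite -expRD subrr expR0.
have h2 : t `^ (- th) * t `^ th = 1.
  by rewrite -powRD ?addNr ?powRr0 // (gt_eqF t0) implybT.
set q := (qp _ _ _).[t].
transitivity ((expR (b * t) * expR (- (b * t))) * (t `^ (- th) * t `^ th) * q); first ring.
by rewrite h1 h2 !mul1r.
Qed.

Lemma derive1n_poly (f : R -> R) (P : {poly R}) :
  (forall t, 0 < t -> f t = P.[t]) -> forall m t, 0 < t -> derive1n m f t = (P^`(m)).[t].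
Proof.
move=> fP; elim => [|m IH] t t0; first by rewrite derive1n0 derivn0 fP.
rewrite derive1nS derive1E derivnS.
have Hn : \near t, derive1n m f t = horner (P^`(m)) t.
  near=> z; rewrite IH //; near: z; exact: lt_nbhsr.
rewrite (near_eq_derive _ Hn).
exact: (@derive_val _ _ _ _ _ _ _ (is_derive_poly _ _)).
Unshelve. all: end_near.
Qed.

Lemma dn_sum (th b : R) n N (l : nat -> R) t : 0 < t ->
  derive1n n (fun y => \sum_(i < N.+1) l i * Laguerre th b i y) t =
  \sum_(i < N.+1) l i * (if (i < n)%N then 0
                         else (- b) ^+ n * Laguerre (th + n%:R) b (i - n) t).
Proof.
move=> t0.
pose P := \sum_(i < N.+1) (l i * (i`!%:R)^-1) *: qp (i%:R + th) b i.
rewrite (@derive1n_poly _ P); last 2 first.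
- move=> y y0; rewrite /P horner_sum; apply: eq_bigr => i _.
  by rewrite Lag_pos // hornerZ mulrA.
- done.
rewrite /P raddf_sum horner_sum; apply: eq_bigr => i _.
rewrite /= derivnZ hornerZ.
case: ifP => [ilt|/negbT]; first by rewrite qp_derivn0 // horner0 !mulr0.
rewrite -leqNgt => nle.
have := @qp_derivn _ (i%:R + th) b (i - n) n; rewrite subnK // => ->.
rewrite Lag_pos // hornerCM.
have -> : (i - n)%:R + (th + n%:R) = i%:R + th :> R by rewrite natrB //; ring.
have F := ffact_fact nle.
have Fi : (i`!%:R : R) = (i ^_ n)%:R * ((i - n)`!)%:R by rewrite -natrM F.
rewrite Fi.
have h1 : ((i ^_ n)%:R : R) != 0 by rewrite pnatr_eq0 -lt0n ffact_gt0.
have h2 : (((i - n)`!)%:R : R) != 0 by rewrite pnatr_eq0 -lt0n fact_gt0.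
by field; rewrite h1 h2.
Qed.
End W.
Local Open Scope classical_set_scope.
Section I.
Variable R : realType.
Notation mu := (@lebesgue_measure R).

Lemma K_derive (x a t : R) : t < x ->
  is_derive t 1 (fun s => powR (x - s) a) (a * powR (x - t) (a - 1) * (- 1)).
Proof.
move=> tx.
have Dl : is_derive t (1:R) (fun s : R => x - s) (- 1).
  have := is_deriveB (is_derive_cst x t (1:R)) (is_derive_id t (1:R)).
  by rewrite sub0r.
have xt : 0 < x - t by rewrite subr_gt0.
have := (@is_derive1_comp _ (@powR R ^~ a) (fun s => x - s) t _ _ (is_derive1_powR a xt) Dl). done.
Qed.

Lemma K_cont (x a t : R) : t < x -> {for t, continuous (fun s => powR (x - s) a)}.
Proof.
move=> tx; have [d _] := K_derive x a t tx.
by apply: differentiable_continuous; exact/derivable1_diffP.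
Qed.

Definition Fp (x a s : R) : R := (- (a + 1)^-1) * powR (x - s) (a + 1).

Lemma Fp_derive (x a s : R) : -1 < a -> s < x -> is_derive s 1 (Fp x a) (powR (x - s) a).
Proof.
move=> a1 sx.
have := is_deriveZ (- (a + 1)^-1) (K_derive x (a + 1) s sx).
have a0 : a + 1 != 0 by rewrite gt_eqF // -ltrBlDr sub0r.
move=> D.
have D' : is_derive s 1 (Fp x a) ( - (a+1)^-1 *: ((a + 1) * powR (x - s) (a + 1 - 1) * -1)) := D.
refine (is_derive_eq D' _).
rewrite /GRing.scale /= addrK; field.
exact: a0.
Qed.

Arguments Fp_derive {x a s}.

Lemma Fp_cont (x a s : R) : -1 < a -> s < x -> {for s, continuous (fun t => - (a + 1)^-1 * powR (x - t) (a + 1))}.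
Proof.
move=> a1 sx; have [d _] := Fp_derive a1 sx.
by apply: differentiable_continuous; exact/derivable1_diffP.
Qed.

Lemma K_FTC (x a c : R) : -1 < a -> 0 < c -> c < x ->
  (\int[mu]_(t in `[0%R, c]) (powR (x - t) a)%:E = (Fp x a c)%:E - (Fp x a 0)%:E)%E.
Proof.
move=> a1 c0 cx.
apply: continuous_FTC2 => //.
- apply: continuous_subspace_itv => t; rewrite in_itv /= => /andP[_ tc].
  by apply: K_cont; exact: le_lt_trans tc cx.
- split.
  + move=> t; rewrite in_itv /= => /andP[_ tc].
    by have [] := Fp_derive a1 (lt_trans tc cx).
  + by apply: cvg_at_right_filter; apply: Fp_cont => //; exact: lt_trans cx.
  + by apply: cvg_at_left_filter; apply: Fp_cont.
- move=> t; rewrite in_itv /= => /andP[_ tc].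
  by rewrite derive1E (@derive_val _ _ _ _ _ _ _ (Fp_derive a1 (lt_trans tc cx))).
Qed.

Lemma K_meas (x a : R) D : measurable_fun D (fun t : R => powR (x - t) a).
Proof.
apply: (@measurableT_comp _ _ _ _ _ _ (@powR R ^~ a)) => //.
exact: measurable_funB.
Qed.

Lemma K_int (x a : R) : 0 < x -> -1 < a ->
  mu.-integrable `]0%R, x] (EFin \o (fun t => powR (x - t) a)).
Proof.
move=> x0 a1.
apply/integrableP; split; first by apply/measurable_EFinP; exact: K_meas.
under eq_integral => t _ do rewrite gee0_abs ?lee_fin ?powR_ge0 //.
rewrite -integral_itv_bndo_bndc; last by apply/measurable_EFinP; exact: K_meas.
pose c (k : nat) := x - x / k.+2%:R.
have c0 k : 0 < c k.
  by rewrite /c subr_gt0 gtr_pMr // invf_lt1 // ltr1n.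
have cx k : c k < x by rewrite /c ltrBlDr ltrDl divr_gt0.
pose Fk (k : nat) := `]0%R, c k].
have nndF : {homo Fk : n m / (n <= m)%N >-> (n <= m)%O}.
  move=> i j ij; rewrite subsetEset; apply: subset_itvl; rewrite bnd_simp.
  rewrite /c lerD2l lerN2 ler_pM2l // lef_pV2 ?posrE // ler_nat.
  by rewrite ltnS ltnS.
have mF i : measurable (Fk i) by exact: measurable_itv.
have mf i : measurable_fun (Fk i) (EFin \o (fun t => powR (x - t) a)).
  by apply/measurable_EFinP; exact: K_meas.
have f0 i t : Fk i t -> (0 <= (EFin \o (fun t => powR (x - t) a)) t)%E.
  by move=> _; rewrite lee_fin powR_ge0.
have H := ge0_nondecreasing_set_cvg_integral (mu := mu) nndF mF mf f0.
have EU : \bigcup_i Fk i = `]0%R, x[.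
  apply/seteqP; split.
  - move=> t [k _]; rewrite /Fk /= !in_itv /= => /andP[t0 tc].
    by rewrite t0 (le_lt_trans tc (cx k)).
  - move=> t; rewrite /= in_itv /= => /andP[t0 tx].
    have tx1 : t / x < 1 by rewrite ltr_pdivrMr // mul1r.
    have [k Hk] := ltr_add_invr tx1.
    exists k => //; rewrite /Fk /= in_itv /= t0 /= /c.
    have vu : (k.+2%:R)^-1 <= (k.+1%:R)^-1 :> R.
      by rewrite lef_pV2 ?posrE // ler_nat.
    have tE : t / x * x = t by rewrite divfK // gt_eqF.
    set u := (k.+1%:R)^-1 in Hk vu; set v := (k.+2%:R)^-1 in vu *.
    set w := t / x in Hk tE.
    rewrite -tE; nra.
rewrite EU in H.
rewrite -(cvg_lim _ H) //.
apply: (@le_lt_trans _ _ (- Fp x a 0)%:E); last exact: ltry.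
apply: lime_le; first by apply/cvg_ex; eexists; exact: H.
apply: nearW => k.
apply: (@le_trans _ _ (\int[mu]_(t in `[0%R, c k]) (EFin \o (fun t => powR (x - t) a)) t)%E).
  apply: ge0_subset_integral => //.
  - exact: mF.
  - by apply/measurable_EFinP; exact: K_meas.
  - by move=> t _; rewrite /= lee_fin powR_ge0.
  - by apply: subset_itv; rewrite bnd_simp.
rewrite K_FTC // -EFinB lee_fin -[leRHS]add0r lerD2r /Fp.
by rewrite mulNr oppr_le0 mulr_ge0 ?powR_ge0 // invr_ge0 ltW // -ltrBlDr sub0r.
Qed.

Lemma Kg_int (x a : R) (g : R -> R) (p : {poly R}) : 0 < x -> -1 < a ->
  (forall t, 0 < t -> g t = p.[t]) ->
  mu.-integrable `]0%R, x] (EFin \o (fun t => powR (x - t) a * g t)).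
Proof.
move=> x0 a1 gp.
have [|cM _ HM] := @EVT_max R (fun t => `|p.[t]|) 0 x (ltW x0).
  apply: continuous_subspace_itv => t _; apply: cvg_norm; exact: continuous_horner.
set M := `|p.[cM]| in HM.
apply: (@le_integrable _ _ _ mu _ (measurable_itv _) _ (fun t => (M%:E * (EFin \o (fun t => powR (x - t) a)) t)%E)).
- apply/measurable_EFinP; apply: measurable_funM; first exact: K_meas.
  apply: (eq_measurable_fun (horner p)); last exact: measurable_poly.
  by move=> t; rewrite inE /= in_itv /= => /andP[t0 _]; rewrite gp.
- move=> t; rewrite /= in_itv /= => /andP[t0 tx].
  rewrite lee_fin !normrM (ger0_norm (powR_ge0 _ _)) (ger0_norm (normr_ge0 _)).
  rewrite mulrC ler_wpM2r ?powR_ge0 // gp //; apply: HM.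
  by rewrite in_itv /= (ltW t0) tx.
- apply: integrableZl; first exact: measurable_itv.
  exact: K_int.
Qed.

Lemma Rint_cc_oc (f : R -> R) (x : R) :
  mu.-integrable `]0%R, x] (EFin \o f) ->
  \int[mu]_(t in `[0%R, x]) f t = \int[mu]_(t in `]0%R, x]) f t.
Proof.
move=> fi; rewrite /Rintegral integral_itv_obnd_cbnd //.
exact: measurable_int fi.
Qed.

Lemma Rint_sum (D : set R) (F : nat -> R -> R) m : measurable D ->
  (forall k, mu.-integrable D (EFin \o F k)) ->
  mu.-integrable D (EFin \o (fun t => \sum_(k < m) F k t)) /\
  \int[mu]_(t in D) (\sum_(k < m) F k t) = \sum_(k < m) \int[mu]_(t in D) F k t.
Proof.
move=> mD Fi; elim: m => [|m [IHi IHe]].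
  split.
    apply: (eq_integrable _ (fun t => (0 : R)%:E)) => //.
      by move=> t _; rewrite /= big_ord0.
    exact: integrable0.
  have -> : \int[mu]_(t in D) (\sum_(k < 0) F k t) = \int[mu]_(t in D) (0:R).
    by apply: eq_Rintegral => t _; rewrite big_ord0.
  by rewrite Rintegral_cst // mul0r big_ord0.
have E : EFin \o (fun t => \sum_(k < m.+1) F k t) =
    (EFin \o (fun t => \sum_(k < m) F k t)) \+ (EFin \o F m).
  by apply/funext => t; rewrite /= big_ord_recr /= EFinD.
split; first by rewrite E; exact: integrableD.
rewrite big_ord_recr /= -IHe -RintegralD //.
by apply: eq_Rintegral => t _; rewrite big_ord_recr.
Qed.
End I.

Theorem mainTheorem2 (R : realType) (theta beta : R) (n : nat)
  (rho : R -> R) (rho_min rho_max : R) :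
  -1 < theta -> 0 < beta -> (0 < n)%N ->
  n%:R - 1 < rho_min -> rho_max < n%:R ->
  (forall x : R, 0 < x -> rho_min < rho x /\ rho x < rho_max) ->
  forall (N : nat) (l : nat -> R) (x : R), 0 < x ->
    caputo n rho (fun y => \sum_(i < N.+1) l i * Laguerre theta beta i y) x
    = \sum_(i < N.+1) l i * Dcoef n theta beta rho i x.
Proof.
move=> th1 b0 n0 hmin hmax hrho N l x x0.
have [rl ru] := hrho x x0.
have a1 : -1 < n%:R - rho x - 1 by lra.
rewrite /caputo /Dcoef /hatLaguerre /=.
set a := n%:R - rho x - 1.
set G := Gamma _.
pose Pj (j : nat) : {poly R} := (j`!%:R)^-1 *: qp (j%:R + (theta + n%:R)) beta j.
have LP j t : 0 < t -> Laguerre (theta + n%:R) beta j t = (Pj j).[t].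
  by move=> t0; rewrite Lag_pos // hornerZ.
have KL j : (lebesgue_measure).-integrable `]0%R, x]
    (EFin \o (fun t => powR (x - t) a * Laguerre (theta + n%:R) beta j t)).
  exact: (@Kg_int R x a _ (Pj j) x0 a1 (LP j)).
pose F i t := powR (x - t) a * (l i * (if (i < n)%N then 0
                         else (- beta) ^+ n * Laguerre (theta + n%:R) beta (i - n)%N t)).
have Fi i : (lebesgue_measure).-integrable `]0%R, x] (EFin \o F i).
  have gp : forall t, 0 < t -> (fun t => l i * (if (i < n)%N then 0 else (- beta) ^+ n * Laguerre (theta + n%:R) beta (i - n)%N t)) t = (l i *: (if (i < n)%N then 0 else (- beta) ^+ n *: Pj (i - n)%N)).[t].
    move=> t t0; rewrite hornerZ; case: ifP => _; first by rewrite horner0.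
    by rewrite hornerZ LP.
  exact: (@Kg_int R x a _ _ x0 a1 gp).
have [|SI SE] := @Rint_sum R `]0%R, x] F N.+1 _ Fi; first exact: measurable_itv.
have E1 : \int[lebesgue_measure]_(t in `[0%R, x])
    (powR (x - t) a * derive1n n (fun y => \sum_(i < N.+1) l i * Laguerre theta beta i y) t)
    = \sum_(i < N.+1) \int[lebesgue_measure]_(t in `]0%R, x]) F i t.
  have eqF : {in `]0%R, x], (fun t => \sum_(k < N.+1) F k t) =1
      (fun t => powR (x - t) a * derive1n n (fun y => \sum_(i < N.+1) l i * Laguerre theta beta i y) t)}.
    move=> t; rewrite inE /= in_itv /= => /andP[t0 _].
    by rewrite dn_sum // mulr_sumr.
  rewrite Rint_cc_oc; last first.
    refine (eq_integrable _ _ _ _ SI); first exact: measurable_itv.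
    by move=> t /eqF /= ->.
  by rewrite -SE; apply: eq_Rintegral => t /eqF ->.
rewrite E1 mulr_sumr; apply: eq_bigr => i _.
rewrite /F; case: ifP => _.
  have -> : \int[lebesgue_measure]_(t in `]0%R, x]) (powR (x - t) a * (l i * 0)) =
      \int[lebesgue_measure]_(t in `]0%R, x]) (0:R).
    by apply: eq_Rintegral => t _; rewrite !mulr0.
  by rewrite Rintegral_cst ?mul0r ?mulr0 //; exact: measurable_itv.
rewrite Rint_cc_oc //.
have -> : \int[lebesgue_measure]_(t in `]0%R, x])
    (powR (x - t) a * (l i * ((- beta) ^+ n * Laguerre (theta + n%:R) beta (i - n)%N t))) =
    \int[lebesgue_measure]_(t in `]0%R, x])
    ((l i * (- beta) ^+ n) * (powR (x - t) a * Laguerre (theta + n%:R) beta (i - n)%N t)).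
  by apply: eq_Rintegral => t _; ring.
rewrite RintegralZl //; ring.
Qed.
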